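(* Let $I$ be an open interval and let $a_1,a_2,a_3\in I$ be pairwise distinct. Then for all $f\in\mathscr{C}^3(I)$ and $x\in I$, \[ \begin{aligned} f(x)&=\bigg(f(a_1)+\int_{a_1}^x(f'''-f')(t)\big(\cosh(a_1-t)-1\big)dt\bigg)\frac{\cosh\big(x-\frac{a_2+a_3}{2}\big)-\cosh\big(\frac{a_2-a_3}{2}\big)}{\cosh\big(a_1-\frac{a_2+a_3}{2}\big)-\cosh\big(\frac{a_2-a_3}{2}\big)}\\ &\quad+\bigg(f(a_2)+\int_{a_2}^x(f'''-f')(t)\big(\cosh(a_2-t)-1\big)dt\bigg)\frac{\cosh\big(x-\frac{a_1+a_3}{2}\big)-\cosh\big(\frac{a_1-a_3}{2}\big)}{\cosh\big(a_2-\frac{a_1+a_3}{2}\big)-\cosh\big(\frac{a_1-a_3}{2}\big)}\\ &\quad+\bigg(f(a_3)+\int_{a_3}^x(f'''-f')(t)\big(\cosh(a_3-t)-1\big)dt\bigg)\frac{\cosh\big(x-\frac{a_1+a_2}{2}\big)-\cosh\big(\frac{a_1-a_2}{2}\big)}{\cosh\big(a_3-\frac{a_1+a_2}{2}\big)-\cosh\big(\frac{a_1-a_2}{2}\big)}. \end{aligned} \]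
   Context: $\mathscr{C}^3(I)$ denotes the space of three times continuously differentiable complex-valued functions on $I$. *)

(* Defs.v *)
From Stdlib Require Export Reals.
From Coquelicot Require Export Coquelicot.
Open Scope R_scope.

Definition open_interval (l u : Rbar) (x : R) : Prop :=
  Rbar_lt l x /\ Rbar_lt x u.

Definition C3_on (I : R -> Prop) (f f1 f2 f3 : R -> C) : Prop :=
  forall x, I x ->
    @is_derive R_AbsRing C_R_NormedModule f x (f1 x) /\
    @is_derive R_AbsRing C_R_NormedModule f1 x (f2 x) /\
    @is_derive R_AbsRing C_R_NormedModule f2 x (f3 x) /\
    @continuous R_UniformSpace C_R_NormedModule f3 x.

Definition CInt (g : R -> C) (a b : R) : C :=
  @RInt C_R_CompleteNormedModule g a b.

(* Main.v *)
Require Import Defs.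
From Stdlib Require Import Lra FunctionalExtensionality.
From Stdlib Require Import Psatz.

Lemma ex_pos y : 0 < exp y. Proof. apply exp_pos. Qed.

Lemma exp_half2 y : exp y = exp (y/2) * exp (y/2).
Proof. rewrite <- exp_plus. f_equal. field. Qed.

Lemma coshE1 y b c : cosh (y - (b+c)/2) =
  (exp (y/2) * exp (y/2) / (exp (b/2) * exp (c/2)) + exp (b/2) * exp (c/2) / (exp (y/2) * exp (y/2)))/2.
Proof.
  unfold cosh.
  replace (y - (b+c)/2) with (y/2 + y/2 + - (b/2 + c/2)) by field.
  replace (- (y/2 + y/2 + - (b/2 + c/2))) with (b/2 + c/2 + - (y/2 + y/2)) by field.
  rewrite !exp_plus, !exp_Ropp, !exp_plus. field.
  repeat split; apply Rgt_not_eq, exp_pos.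
Qed.

Lemma coshE2 b c : cosh ((b-c)/2) = (exp (b/2) / exp (c/2) + exp (c/2) / exp (b/2))/2.
Proof.
  unfold cosh.
  replace ((b-c)/2) with (b/2 + - (c/2)) by field.
  replace (- (b/2 + - (c/2))) with (c/2 + - (b/2)) by field.
  rewrite !exp_plus, !exp_Ropp. field.
  repeat split; apply Rgt_not_eq, exp_pos.
Qed.

Lemma coshE3 b y : cosh (b - y) = (exp (b/2) * exp (b/2) / (exp (y/2) * exp (y/2)) + exp (y/2) * exp (y/2) / (exp (b/2) * exp (b/2)))/2.
Proof.
  unfold cosh.
  replace (b - y) with (b/2 + b/2 + - (y/2 + y/2)) by field.
  replace (- (b/2 + b/2 + - (y/2 + y/2))) with (y/2 + y/2 + - (b/2 + b/2)) by field.
  rewrite !exp_plus, !exp_Ropp, !exp_plus. field.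
  repeat split; apply Rgt_not_eq, exp_pos.
Qed.

Lemma sinhE3 b y : sinh (b - y) = (exp (b/2) * exp (b/2) / (exp (y/2) * exp (y/2)) - exp (y/2) * exp (y/2) / (exp (b/2) * exp (b/2)))/2.
Proof.
  unfold sinh.
  replace (b - y) with (b/2 + b/2 + - (y/2 + y/2)) by field.
  replace (- (b/2 + b/2 + - (y/2 + y/2))) with (y/2 + y/2 + - (b/2 + b/2)) by field.
  rewrite !exp_plus, !exp_Ropp, !exp_plus. field.
  repeat split; apply Rgt_not_eq, exp_pos.
Qed.

Lemma sq_neq b c : b <> c -> exp (b/2) * exp (b/2) - exp (c/2) * exp (c/2) <> 0.
Proof.
  intros H E.
  assert (exp (b/2) <> exp (c/2)).
  { intro E2. apply exp_inv in E2. apply H. lra. }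
  pose proof (exp_pos (b/2)); pose proof (exp_pos (c/2)).
  destruct (Rlt_or_le (exp (b/2)) (exp (c/2))); nra.
Qed.

Section Id.
Variables x a1 a2 a3 : R.
Hypotheses (H12 : a1 <> a2) (H13 : a1 <> a3) (H23 : a2 <> a3).
Let L1 := (cosh (x - (a2 + a3) / 2) - cosh ((a2 - a3) / 2))
               / (cosh (a1 - (a2 + a3) / 2) - cosh ((a2 - a3) / 2)).
Let L2 := (cosh (x - (a1 + a3) / 2) - cosh ((a1 - a3) / 2))
               / (cosh (a2 - (a1 + a3) / 2) - cosh ((a1 - a3) / 2)).
Let L3 := (cosh (x - (a1 + a2) / 2) - cosh ((a1 - a2) / 2))
               / (cosh (a3 - (a1 + a2) / 2) - cosh ((a1 - a2) / 2)).

Ltac go :=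
  unfold L1, L2, L3; rewrite ?coshE1, ?coshE2, ?coshE3, ?sinhE3;
  pose proof (sq_neq _ _ H12); pose proof (sq_neq _ _ H13); pose proof (sq_neq _ _ H23);
  pose proof (exp_pos (x/2)); pose proof (exp_pos (a1/2));
  pose proof (exp_pos (a2/2)); pose proof (exp_pos (a3/2));
  set (X := exp (x/2)) in *; set (A := exp (a1/2)) in *;
  set (B := exp (a2/2)) in *; set (C := exp (a3/2)) in *.

Ltac sidec := repeat split; try lra;
  match goal with
  | h1 : ?a - ?b <> 0, h2 : ?c - ?d <> 0 |- _ =>
    intro E; apply (Rmult_integral_contrapositive_currified _ _ h1 h2); nra
  end.

Lemma S0 : L1 + L2 + L3 = 1.
Proof. go. field. all: sidec. Qed.
Lemma S1 : L1 * sinh (a1 - x) + L2 * sinh (a2 - x) + L3 * sinh (a3 - x) = 0.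
Proof. go. field. all: sidec. Qed.
Lemma S2 : L1 * cosh (a1 - x) + L2 * cosh (a2 - x) + L3 * cosh (a3 - x) = 1.
Proof. go. field. all: sidec. Qed.
End Id.

Ltac csolve :=
  unfold scal, minus, plus, opp; simpl;
  unfold Cmult, Cminus, RtoC, Cplus, Copp; simpl;
  unfold prod_scal, prod_plus, prod_opp, mult; simpl; f_equal;
  unfold scal, plus, opp; simpl; unfold mult; simpl; ring.

Lemma is_derive_scal_fct (k : R -> R) (g : R -> C) x dk dg :
  is_derive k x dk -> @is_derive R_AbsRing C_R_NormedModule g x dg ->
  @is_derive R_AbsRing C_R_NormedModule (fun y => scal (k y) (g y)) x
     (plus (scal dk (g x)) (scal (k x) dg)).
Proof.
  unfold is_derive. intros H1 H2.
  eapply filterdiff_ext_lin.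
  - apply (filterdiff_scal_fct x k g); [ intros; apply Rmult_comm | exact H1 | exact H2].
  - intro y. simpl. destruct (g x) as [p q], dg as [p' q']. csolve.
Qed.

Lemma between_in l u a x t : open_interval l u a -> open_interval l u x ->
  Rmin a x <= t <= Rmax a x -> open_interval l u t.
Proof.
  unfold open_interval, Rmin, Rmax.
  destruct l, u; simpl; destruct Rle_dec; intuition lra.
Qed.

Lemma key l u f f1 f2 f3 a x : C3_on (open_interval l u) f f1 f2 f3 ->
  open_interval l u a -> open_interval l u x ->
  (f a + CInt (fun t => (f3 t - f1 t) * RtoC (cosh (a - t) - 1)) a x)%C =
  (f x + f1 x * RtoC (sinh (a - x)) + f2 x * RtoC (cosh (a - x) - 1))%C.
Proof.
  intros HC Ha Hx.
  set (E := fun y => @plus C_R_NormedModule (f y)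
      (plus (@scal R_Ring C_R_ModuleSpace (sinh (a - y)) (f1 y))
            (@scal R_Ring C_R_ModuleSpace (cosh (a-y) - 1) (f2 y)))).
  set (H := fun y => @scal R_Ring C_R_ModuleSpace (cosh (a - y) - 1)
                      (@minus C_R_NormedModule (f3 y) (f1 y))).
  assert (HI : @is_RInt C_R_CompleteNormedModule H a x (minus (E x) (E a))).
  { apply (@is_RInt_derive C_R_CompleteNormedModule E H); intros t Ht;
      destruct (HC t (between_in _ _ _ _ _ Ha Hx Ht)) as (d1&d2&d3&c3).
    - replace (H t) with (@plus C_R_NormedModule (f1 t)
          (plus (plus (@scal R_Ring C_R_ModuleSpace (- cosh (a-t)) (f1 t))
                      (@scal R_Ring C_R_ModuleSpace (sinh (a-t)) (f2 t)))
                (plus (@scal R_Ring C_R_ModuleSpace (- sinh (a-t)) (f2 t))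
                      (@scal R_Ring C_R_ModuleSpace (cosh (a-t) - 1) (f3 t))))).
      + apply is_derive_plus; [exact d1|].
        apply (@is_derive_plus R_AbsRing C_R_NormedModule).
        * apply (is_derive_scal_fct (fun y => sinh (a - y))); auto. unfold sinh. auto_derive; auto. unfold cosh, Rminus. field.
        * apply (is_derive_scal_fct (fun y => cosh (a - y) - 1)); auto.
          unfold cosh. auto_derive; auto. unfold sinh, Rminus. field.
      + unfold H. destruct (f1 t) as [p q], (f2 t) as [p' q'], (f3 t) as [p'' q''].
        csolve.
    - unfold H. apply (@continuous_scal R_UniformSpace R_AbsRing C_R_NormedModule (fun y => cosh (a - y) - 1)).
      + apply (@ex_derive_continuous R_AbsRing (AbsRing_NormedModule R_AbsRing)). unfold cosh. auto_derive. auto.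
      + apply (@continuous_minus R_UniformSpace R_AbsRing C_R_NormedModule); [exact c3|].
        apply ex_derive_continuous. eexists; exact d2. }
  unfold CInt.
  replace (fun t => (f3 t - f1 t) * RtoC (cosh (a - t) - 1))%C with H.
  2: { apply functional_extensionality; intro t. unfold H.
       destruct (f1 t) as [p q], (f3 t) as [p'' q'']. csolve. }
  rewrite (is_RInt_unique _ _ _ _ HI).
  unfold E. rewrite Rminus_diag, sinh_0, cosh_0.
  destruct (f a) as [p0 q0], (f x) as [p q], (f1 a) as [p1 q1], (f1 x) as [p2 q2],
     (f2 a) as [p3 q3], (f2 x) as [p4 q4].
  csolve.
Qed.

Theorem mainTheorem11 (l u : Rbar) (a1 a2 a3 : R)
  (Ha1 : open_interval l u a1) (Ha2 : open_interval l u a2)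
  (Ha3 : open_interval l u a3)
  (H12 : a1 <> a2) (H13 : a1 <> a3) (H23 : a2 <> a3) :
  forall (f f1 f2 f3 : R -> C),
  C3_on (open_interval l u) f f1 f2 f3 ->
  forall x : R, open_interval l u x ->
  f x =
    ((f a1 + CInt (fun t => (f3 t - f1 t) * RtoC (cosh (a1 - t) - 1)) a1 x)
       * RtoC ((cosh (x - (a2 + a3) / 2) - cosh ((a2 - a3) / 2))
               / (cosh (a1 - (a2 + a3) / 2) - cosh ((a2 - a3) / 2)))
   + (f a2 + CInt (fun t => (f3 t - f1 t) * RtoC (cosh (a2 - t) - 1)) a2 x)
       * RtoC ((cosh (x - (a1 + a3) / 2) - cosh ((a1 - a3) / 2))
               / (cosh (a2 - (a1 + a3) / 2) - cosh ((a1 - a3) / 2)))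
   + (f a3 + CInt (fun t => (f3 t - f1 t) * RtoC (cosh (a3 - t) - 1)) a3 x)
       * RtoC ((cosh (x - (a1 + a2) / 2) - cosh ((a1 - a2) / 2))
               / (cosh (a3 - (a1 + a2) / 2) - cosh ((a1 - a2) / 2))))%C.
Proof.
  intros f f1 f2 f3 HC x Hx.
  rewrite (key l u f f1 f2 f3 a1 x HC Ha1 Hx), (key l u f f1 f2 f3 a2 x HC Ha2 Hx),
    (key l u f f1 f2 f3 a3 x HC Ha3 Hx).
  pose proof (S0 x a1 a2 a3 H12 H13 H23) as e0.
  pose proof (S1 x a1 a2 a3 H12 H13 H23) as e1.
  pose proof (S2 x a1 a2 a3 H12 H13 H23) as e2.
  set (L1 := (cosh (x - (a2 + a3) / 2) - cosh ((a2 - a3) / 2))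
               / (cosh (a1 - (a2 + a3) / 2) - cosh ((a2 - a3) / 2))) in *.
  set (L2 := (cosh (x - (a1 + a3) / 2) - cosh ((a1 - a3) / 2))
               / (cosh (a2 - (a1 + a3) / 2) - cosh ((a1 - a3) / 2))) in *.
  set (L3 := (cosh (x - (a1 + a2) / 2) - cosh ((a1 - a2) / 2))
               / (cosh (a3 - (a1 + a2) / 2) - cosh ((a1 - a2) / 2))) in *.
  destruct (f x) as [p q], (f1 x) as [p1 q1], (f2 x) as [p2 q2].
  unfold Cmult, RtoC, Cplus, Cminus, Copp; simpl.
  pose proof (f_equal (Rmult p) e0). pose proof (f_equal (Rmult q) e0).
  pose proof (f_equal (Rmult p2) e0). pose proof (f_equal (Rmult q2) e0).
  pose proof (f_equal (Rmult p1) e1). pose proof (f_equal (Rmult q1) e1).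
  pose proof (f_equal (Rmult p2) e2). pose proof (f_equal (Rmult q2) e2).
  f_equal; lra.
Qed.
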